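(* Let $f\in\Delta(\mathcal{G},\le)$, let $1\le\alpha\le\beta$, and suppose $f_\alpha\in\Delta(\mathcal{A},\le)$. Let $H,G_1,\dots,G_r$ be finite simple graphs and $q$ a positive integer such that $\widehat{H}\otimes\mathcal{C}_q\le\bigoplus_{d=1}^r\widehat{G_d}\otimes\mathcal{C}_d$. Then $f_\beta(\widehat{H}\otimes\mathcal{C}_q)\le f_\beta\big(\bigoplus_{d=1}^r\widehat{G_d}\otimes\mathcal{C}_d\big)$, i.e. $f(H)q^\beta\le\sum_{d=1}^r f(G_d)d^\beta$.
   Context: Graphs are finite simple undirected; $x\simeq x'$ means equal or adjacent. Strong product $G\boxtimes H$: vertex set $V(G)\times V(H)$, $(g,h)\simeq(g',h')$ iff $g\simeq g'$ and $h\simeq h'$. $\sqcup$ is disjoint union. $H\le G$ for graphs means there is a homomorphism from the complement of $H$ to the complement of $G$. $\mathcal{G}$ is the semiring of isomorphism classes of graphs with $\sqcup,\boxtimes$, and $\Delta(\mathcal{G},\le)$ is the set of maps $f$ from graphs to $\mathbb{R}_{\ge0}$ with $f(\text{empty graph})=0$, $f(K_1)=1$, $f(G\sqcup H)=f(G)+f(H)$, $f(G\boxtimes H)=f(G)f(H)$, and $H\le G\Rightarrow f(H)\le f(G)$. A noncommutative graph is a subspace $S\subseteq B(\mathcal{H})$ ($\mathcal{H}$ finite-dimensional complex Hilbert space) with $I\in S$, $S^*=S$; isomorphism is unitary conjugation. A cohomomorphism from $T\subseteq B(\mathcal{K})$ to $S\subseteq B(\mathcal{H})$ is a finite family of linear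 maps $E_i:\mathcal{K}\to\mathcal{H}$ with $\sum_iE_i^*E_i=I$ and $E_i^*SE_j\subseteq T$ for all $i,j$; write $T\le S$ if one exists. Tensor product and direct sum of noncommutative graphs are $\operatorname{span}\{A\otimes B\}$ and $\{A\oplus B\}$. For a graph $G$, $\widehat{G}=\operatorname{span}\{|x\rangle\langle x'|:x\simeq x'\}\subseteq B(\mathbb{C}^{V(G)})$; $\mathcal{C}_d=\mathbb{C}I\subseteq B(\mathbb{C}^d)$. $\mathcal{A}$ is the semiring (under $\oplus,\otimes$, isomorphism classes) generated by all $\widehat{G}$ and all $\mathcal{C}_d$; every element has the form $\bigoplus_{d=1}^r\widehat{G_d}\otimes\mathcal{C}_d$. For $f\in\Delta(\mathcal{G},\le)$ and $\alpha\ge1$, $f_\alpha:\mathcal{A}\to\mathbb{R}_{\ge0}$ is the semiring homomorphism $f_\alpha(\bigoplus_{d=1}^r\widehat{G_d}\otimes\mathcal{C}_d)=\sum_{d=1}^r f(G_d)d^\alpha$. $\Delta(\mathcal{A},\le)$ denotes the set of semiring homomorphisms $\mathcal{A}\to\mathbb{R}_{\ge0}$ that are monotone with respect to $\le$. *)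

(* Defs.v *)
From mathcomp Require Import all_boot all_algebra.
From mathcomp Require Import reals exp.
From mathcomp Require Import complex mxtens.

Set Implicit Arguments.
Unset Strict Implicit.
Unset Printing Implicit Defensive.

Import GRing.Theory Num.Theory.
Local Open Scope ring_scope.

Record graph := Graph {
  gV : finType;
  gadj : rel gV;
  gadj_sym : symmetric gadj;
  gadj_irr : irreflexive gadj }.

Definition gsim (G : graph) (x y : gV G) : bool := (x == y) || @gadj G x y.

Lemma gsim_sym (G : graph) : symmetric (@gsim G).
Proof. by move=> x y; rewrite /gsim eq_sym gadj_sym. Qed.

Definition gempty : graph :=
  @Graph void (fun _ _ => false) (fun _ _ => erefl) (fun _ => erefl).

Definition gK1 : graph :=
  @Graph unit (fun _ _ => false) (fun _ _ => erefl) (fun _ => erefl).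

Definition union_adj (G H : graph) (x y : (gV G + gV H)%type) : bool :=
  match x, y with
  | inl a, inl b => @gadj G a b
  | inr a, inr b => @gadj H a b
  | _, _ => false
  end.

Lemma union_adj_sym G H : symmetric (@union_adj G H).
Proof. by case=> a [] b //=; rewrite gadj_sym. Qed.

Lemma union_adj_irr G H : irreflexive (@union_adj G H).
Proof. by case=> a /=; rewrite gadj_irr. Qed.

Definition gunion (G H : graph) : graph :=
  @Graph (gV G + gV H)%type (@union_adj G H)
         (@union_adj_sym G H) (@union_adj_irr G H).

Definition strong_adj (G H : graph) (x y : (gV G * gV H)%type) : bool :=
  [&& gsim x.1 y.1, gsim x.2 y.2 & x != y].

Lemma strong_adj_sym G H : symmetric (@strong_adj G H).
Proof. by move=> x y; rewrite /strong_adj gsim_sym (gsim_sym x.2) eq_sym. Qed.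

Lemma strong_adj_irr G H : irreflexive (@strong_adj G H).
Proof. by move=> x; rewrite /strong_adj eqxx !andbF. Qed.

Definition gstrong (G H : graph) : graph :=
  @Graph (gV G * gV H)%type (@strong_adj G H)
         (@strong_adj_sym G H) (@strong_adj_irr G H).

Definition compl_adj (G : graph) (x y : gV G) : bool :=
  (x != y) && ~~ @gadj G x y.

Lemma compl_adj_sym G : symmetric (@compl_adj G).
Proof. by move=> x y; rewrite /compl_adj eq_sym gadj_sym. Qed.

Lemma compl_adj_irr G : irreflexive (@compl_adj G).
Proof. by move=> x; rewrite /compl_adj eqxx. Qed.

Definition gcompl (G : graph) : graph :=
  @Graph (gV G) (@compl_adj G) (@compl_adj_sym G) (@compl_adj_irr G).

Definition ghom (G H : graph) : Prop :=
  exists phi : gV G -> gV H, forall x y, @gadj G x y -> @gadj H (phi x) (phi y).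

Definition graph_le (H G : graph) : Prop := ghom (gcompl H) (gcompl G).

(* Delta(G, <=): monotone semiring homomorphisms to R_{>=0}.  A map on
   isomorphism classes is the same as a map on graphs invariant under
   isomorphism; invariance follows from monotonicity. *)
Definition in_DeltaG (R : realType) (f : graph -> R) : Prop :=
  (forall G, 0 <= f G) /\
  f gempty = 0 /\
  f gK1 = 1 /\
  (forall G H, f (gunion G H) = f G + f H) /\
  (forall G H, f (gstrong G H) = f G * f H) /\
  (forall G H, graph_le H G -> f H <= f G).

(* A subspace S of B(C^n) = 'M_n is encoded (as in mxalgebra) by a matrix    *)
(* whose row space is { mxvec A | A in S }.                                  *)

Section NC.
Variable R : rcfType.
Local Notation C := (R[i]).

Record ncgraph := NCGraph { ncdim : nat; ncsp : 'M[C]_(ncdim * ncdim) }.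

Definition ncmem (S : ncgraph) (A : 'M[C]_(ncdim S)) : bool :=
  (mxvec A <= ncsp S)%MS.

Definition adjmx m n (E : 'M[C]_(m, n)) : 'M[C]_(n, m) := (map_mx conjc E)^T.

Definition nc_le (T S : ncgraph) : Prop :=
  exists (k : nat) (E : 'I_k -> 'M[C]_(ncdim S, ncdim T)),
    (\sum_(i < k) adjmx (E i) *m E i = 1%:M) /\
    (forall (i j : 'I_k) (A : 'M[C]_(ncdim S)),
        @ncmem S A -> @ncmem T (adjmx (E i) *m A *m E j)).

Definition nc_hat (G : graph) : ncgraph :=
  @NCGraph #|gV G|
    (\sum_(x : gV G) \sum_(y : gV G | gsim x y)
        <<mxvec (delta_mx (enum_rank x) (enum_rank y) : 'M[C]_(#|gV G|))>>)%MS.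

Definition nc_C (d : nat) : ncgraph :=
  @NCGraph d (<<mxvec (1%:M : 'M[C]_d)>>)%MS.

Definition nc_tens (S T : ncgraph) : ncgraph :=
  @NCGraph (ncdim S * ncdim T)
    (\sum_(i < ncdim S * ncdim S) \sum_(j < ncdim T * ncdim T)
        <<mxvec (vec_mx (row i (ncsp S)) *t vec_mx (row j (ncsp T)))>>)%MS.

Definition nc_oplus (S T : ncgraph) : ncgraph :=
  @NCGraph (ncdim S + ncdim T)
    ((\sum_(i < ncdim S * ncdim S)
        <<mxvec (block_mx (vec_mx (row i (ncsp S))) 0 0 0
                 : 'M[C]_(ncdim S + ncdim T))>>) +
     (\sum_(j < ncdim T * ncdim T)
        <<mxvec (block_mx 0 0 0 (vec_mx (row j (ncsp T)))
                 : 'M[C]_(ncdim S + ncdim T))>>))%MS.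

Definition nc_zero : ncgraph := @NCGraph 0 0.

Fixpoint ncnf_from (k : nat) (Gs : seq graph) : ncgraph :=
  match Gs with
  | [::] => nc_zero
  | G :: Gs' => nc_oplus (nc_tens (nc_hat G) (nc_C k)) (ncnf_from k.+1 Gs')
  end.

(* normal form element of A: (+)_{d=1}^r \hat{G_d} (x) C_d, Gs = [G_1;...;G_r] *)
Definition ncnf (Gs : seq graph) : ncgraph := ncnf_from 1 Gs.

End NC.

Definition falpha (R : realType) (f : graph -> R) (alpha : R) (Gs : seq graph) : R :=
  \sum_(d < size Gs) f (nth gempty Gs d) * powR (d.+1)%:R alpha.

(* f_alpha in Delta(A, <=): f_alpha is monotone w.r.t. cohomomorphism.
   Every element of A is isomorphic to some ncnf Gs. *)
Definition falpha_monotone (R : realType) (f : graph -> R) (alpha : R) : Prop :=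
  forall Gs Hs : seq graph,
    nc_le (ncnf R Hs) (ncnf R Gs) -> falpha f alpha Hs <= falpha f alpha Gs.

(* Main.v *)
Require Import Defs.
From mathcomp Require Import all_boot all_algebra.
From mathcomp Require Import reals exp.
From mathcomp Require Import complex mxtens.
Set Implicit Arguments.
Unset Strict Implicit.
Unset Printing Implicit Defensive.
From mathcomp Require Import order.
Import Order.TTheory GRing.Theory Num.Theory.
Local Open Scope ring_scope.

Fixpoint restr (q k : nat) (Gs : seq graph) : seq graph :=
  match Gs with
  | [::] => [::]
  | G :: Gs' => (if (k < q)%N then gempty else G) :: restr q k.+1 Gs'
  end.

Section NCL.
Variable R : rcfType.
Local Notation C := (R[i]).

Lemma adjmxM m n p (A : 'M[C]_(m,n)) (B : 'M[C]_(n,p)) :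
  adjmx (A *m B) = adjmx B *m adjmx A.
Proof. by rewrite /adjmx map_mxM trmx_mul. Qed.
Lemma adjmx0 m n : adjmx (0 : 'M[C]_(m,n)) = 0.
Proof. by rewrite /adjmx map_mx0 trmx0. Qed.
Lemma adjmx1 n : adjmx (1%:M : 'M[C]_n) = 1%:M.
Proof. by rewrite /adjmx map_mx1 trmx1. Qed.
Lemma adjmxK m n (A : 'M[C]_(m,n)) : adjmx (adjmx A) = A.
Proof. by apply/matrixP => i j; rewrite !mxE conjcK. Qed.
Lemma adjmx_block m1 m2 n1 n2 (A : 'M[C]_(m1,n1)) (B : 'M[C]_(m1,n2))
  (Cc : 'M[C]_(m2,n1)) (D : 'M[C]_(m2,n2)) :
  adjmx (block_mx A B Cc D) = block_mx (adjmx A) (adjmx Cc) (adjmx B) (adjmx D).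
Proof. by rewrite /adjmx map_block_mx tr_block_mx. Qed.
Lemma adjmx_col m1 m2 n (A : 'M[C]_(m1,n)) (B : 'M[C]_(m2,n)) :
  adjmx (col_mx A B) = row_mx (adjmx A) (adjmx B).
Proof. by rewrite /adjmx map_col_mx tr_col_mx. Qed.
Lemma adjmx_row m n1 n2 (A : 'M[C]_(m,n1)) (B : 'M[C]_(m,n2)) :
  adjmx (row_mx A B) = col_mx (adjmx A) (adjmx B).
Proof. by rewrite /adjmx map_row_mx tr_row_mx. Qed.

Lemma nc_le_trans (T S U : ncgraph R) : nc_le T S -> nc_le S U -> nc_le T U.
Proof.
move=> [k [E [HE1 HE2]]] [l [F [HF1 HF2]]].
pose G (p : 'I_k * 'I_l) := F p.2 *m E p.1.
exists #|[pred : 'I_k * 'I_l | true]|, (fun p => G (enum_val p)); split.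
  rewrite -(big_enum_val (A := [pred : 'I_k * 'I_l | true])
              (fun p => adjmx (G p) *m G p)) /=.
  rewrite -(pair_bigA _ (fun i j => adjmx (G (i, j)) *m G (i, j))) /=.
  rewrite -HE1; apply: eq_bigr => i _.
  under eq_bigr => j _ do rewrite /G /= adjmxM -mulmxA [adjmx (F j) *m _]mulmxA.
  by rewrite -mulmx_sumr -mulmx_suml HF1 mul1mx.
move=> i j A HA; rewrite /G !adjmxM.
rewrite -!mulmxA [adjmx (F _) *m (A *m _)]mulmxA [adjmx (F _) *m A *m _]mulmxA.
by rewrite mulmxA; apply: HE2; apply: HF2.
Qed.

Lemma vec_mxD m n (x y : 'rV[C]_(m * n)) : vec_mx (x + y) = vec_mx x + vec_mx y.
Proof. by apply/matrixP => i j; rewrite !mxE. Qed.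
Lemma vec_mxZ m n a (x : 'rV[C]_(m * n)) : vec_mx (a *: x) = a *: vec_mx x.
Proof. by apply/matrixP => i j; rewrite !mxE. Qed.
Lemma vec_mx0 m n : vec_mx (0 : 'rV[C]_(m * n)) = 0.
Proof. by apply/matrixP => i j; rewrite !mxE. Qed.
Lemma mxvecD m n (x y : 'M[C]_(m, n)) : mxvec (x + y) = mxvec x + mxvec y.
Proof. by rewrite linearD. Qed.
Lemma mxvecZ m n a (x : 'M[C]_(m, n)) : mxvec (a *: x) = a *: mxvec x.
Proof. by rewrite linearZ. Qed.
Lemma mxvec0 m n : mxvec (0 : 'M[C]_(m, n)) = 0.
Proof. by rewrite linear0. Qed.

Lemma sub_row_ind m n (P : 'rV[C]_n -> Prop) (S : 'M[C]_(m, n)) u :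
  P 0 -> (forall a u v, P u -> P v -> P (a *: u + v)) ->
  (forall i, P (row i S)) -> (u <= S)%MS -> P u.
Proof.
move=> P0 PC Pr /submxP [w ->]; rewrite mulmx_sum_row.
elim/big_ind: _ => //.
  by move=> x y Px Py; rewrite -[x]scale1r; apply: PC.
by move=> i _; rewrite -[_ *: _]addr0; apply: PC.
Qed.

Lemma sub_sums_ind n (I : finType) (P : 'rV[C]_n -> Prop) (B : I -> 'M[C]_n) u :
  P 0 -> (forall u v, P u -> P v -> P (u + v)) ->
  (forall i v, (v <= B i)%MS -> P v) -> (u <= \sum_i B i)%MS -> P u.
Proof.
move=> P0 PD PB /sub_sumsmxP [w ->].
elim/big_ind: _ => // i _; apply: (PB i); exact: submxMl.
Qed.

Lemma sub_sumsP_ind n (I : finType) (Q : pred I) (P : 'rV[C]_n -> Prop) (B : I -> 'M[C]_n) u :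
  P 0 -> (forall u v, P u -> P v -> P (u + v)) ->
  (forall i v, Q i -> (v <= B i)%MS -> P v) -> (u <= \sum_(i | Q i) B i)%MS -> P u.
Proof.
move=> P0 PD PB /sub_sumsmxP [w ->].
elim/big_ind: _ => // i Qi; apply: (PB i) => //; exact: submxMl.
Qed.

Lemma sub_adds_ind n (P : 'rV[C]_n -> Prop) m1 m2 (B1 : 'M[C]_(m1, n)) (B2 : 'M[C]_(m2, n)) u :
  (forall u v, P u -> P v -> P (u + v)) ->
  (forall v, (v <= B1)%MS -> P v) -> (forall v, (v <= B2)%MS -> P v) ->
  (u <= B1 + B2)%MS -> P u.
Proof.
move=> PD P1 P2 /sub_addsmxP [w ->]; apply: PD.
  by apply: P1; exact: submxMl.
by apply: P2; exact: submxMl.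
Qed.

Lemma sub_gen_ind n (P : 'rV[C]_n -> Prop) (g : 'rV[C]_n) v :
  (forall a, P (a *: g)) -> (v <= <<g>>)%MS -> P v.
Proof. by move=> Pg; rewrite genmxE => /sub_rVP [a ->]. Qed.

Lemma ncmem0 (S : ncgraph R) : @ncmem R S 0.
Proof. by rewrite /ncmem linear0 sub0mx. Qed.

Lemma ncmemC (S : ncgraph R) a A B : @ncmem R S A -> @ncmem R S B -> @ncmem R S (a *: A + B).
Proof. by rewrite /ncmem linearP => HA HB; rewrite addmx_sub // scalemx_sub. Qed.

Lemma ncmemD (S : ncgraph R) A B : @ncmem R S A -> @ncmem R S B -> @ncmem R S (A + B).
Proof. by move=> HA HB; rewrite -[A]scale1r; apply: ncmemC. Qed.

Lemma ncmemZ (S : ncgraph R) a A : @ncmem R S A -> @ncmem R S (a *: A).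
Proof. by move=> HA; rewrite -[_ *: _]addr0; apply: ncmemC => //; apply: ncmem0. Qed.

Lemma tensmxCl m n p q a (A B : 'M[C]_(m, n)) (D : 'M[C]_(p, q)) :
  (a *: A + B) *t D = a *: (A *t D) + B *t D.
Proof. by apply/matrixP => i j; rewrite !mxE mulrDl mulrA. Qed.

Lemma tensmxDl m n p q (A B : 'M[C]_(m, n)) (D : 'M[C]_(p, q)) :
  (A + B) *t D = A *t D + B *t D.
Proof. by apply/matrixP => i j; rewrite !mxE mulrDl. Qed.

Lemma tensmxZl m n p q a (A : 'M[C]_(m, n)) (D : 'M[C]_(p, q)) :
  (a *: A) *t D = a *: (A *t D).
Proof. by apply/matrixP => i j; rewrite !mxE mulrA. Qed.

Lemma tensmxCr m n p q a (A : 'M[C]_(m, n)) (B D : 'M[C]_(p, q)) :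
  A *t (a *: B + D) = a *: (A *t B) + A *t D.
Proof. by apply/matrixP => i j; rewrite !mxE mulrDr mulrCA. Qed.

Lemma tensmxZr m n p q a (A : 'M[C]_(m, n)) (B : 'M[C]_(p, q)) :
  A *t (a *: B) = (a *: A) *t B.
Proof. by apply/matrixP => i j; rewrite !mxE mulrCA mulrA. Qed.

Lemma ncmem_tens (S T : ncgraph R) A B :
  @ncmem R S A -> @ncmem R T B -> @ncmem R (nc_tens S T) (A *t B).
Proof.
rewrite /ncmem -{2}(mxvecK A) -{2}(mxvecK B).
move: (mxvec A) (mxvec B) => a b Ha Hb.
pose P1 u := (mxvec (vec_mx u *t vec_mx b) <= ncsp (nc_tens S T))%MS.
apply: (sub_row_ind (P := P1) _ _ _ Ha).
- by rewrite /P1 linear0 tens0mx linear0 sub0mx.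
- move=> x u v Hu Hv; rewrite /P1 linearP tensmxCl linearP.
  by rewrite addmx_sub // scalemx_sub.
move=> i; pose P2 w := (mxvec (vec_mx (row i (ncsp S)) *t vec_mx w) <= ncsp (nc_tens S T))%MS.
apply: (sub_row_ind (P := P2) _ _ _ Hb).
- by rewrite /P2 linear0 tensmx0 linear0 sub0mx.
- move=> x u v Hu Hv; rewrite /P2 linearP tensmxCr linearP.
  by rewrite addmx_sub // scalemx_sub.
move=> j; rewrite /P2 /=.
apply: (sumsmx_sup i) => //; apply: (sumsmx_sup j) => //.
by rewrite genmxE.
Qed.

Lemma ncmem_C1 q : @ncmem R (nc_C R q) 1%:M.
Proof. by rewrite /ncmem /= genmxE. Qed.

Lemma ncmem_tensC (S : ncgraph R) q A : @ncmem R S A -> @ncmem R (nc_tens S (nc_C R q)) (A *t 1%:M).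
Proof. by move=> HA; apply: ncmem_tens => //; apply: ncmem_C1. Qed.

Lemma ncmem_tensC_inv (S : ncgraph R) q M :
  @ncmem R (nc_tens S (nc_C R q)) M -> exists A, M = A *t 1%:M /\ @ncmem R S A.
Proof.
rewrite /ncmem -{2}(mxvecK M); move: (mxvec M) => u.
pose P u := exists A, vec_mx u = A *t (1%:M : 'M[C]_q) /\ (mxvec A <= ncsp S)%MS.
apply: (sub_sums_ind (P := P)).
- by exists 0; rewrite vec_mx0 tens0mx mxvec0 sub0mx.
- move=> x y [A [eA HA]] [B [eB HB]]; exists (A + B).
  rewrite vec_mxD eA eB tensmxDl; split => //.
  by rewrite mxvecD addmx_sub.
move=> i v; apply: (sub_sums_ind (P := P)).
- by exists 0; rewrite vec_mx0 tens0mx mxvec0 sub0mx.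
- move=> x y [A [eA HA]] [B [eB HB]]; exists (A + B).
  rewrite vec_mxD eA eB tensmxDl; split => //.
  by rewrite mxvecD addmx_sub.
move=> j w; apply: sub_gen_ind => a.
have: (row j (ncsp (nc_C R q)) <= mxvec (1%:M : 'M[C]_q))%MS.
  by move: (row_sub j (ncsp (nc_C R q))); rewrite /= genmxE.
case/sub_rVP => c ->.
exists ((a * c) *: vec_mx (row i (ncsp S))).
rewrite vec_mxZ vec_mxZ mxvecK tensmxZr mxvecK -tensmxZl scalerA; split => //.
by rewrite mxvecZ vec_mxK scalemx_sub // row_sub.
Qed.


Lemma ncmem_oplus (S T : ncgraph R) A B :
  @ncmem R S A -> @ncmem R T B -> @ncmem R (nc_oplus S T) (block_mx A 0 0 B).
Proof.
move=> HA HB.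
have -> : block_mx A 0 0 B = block_mx A 0 0 0 + block_mx 0 0 0 B.
  by rewrite add_block_mx !addr0 add0r.
apply: ncmemD.
  move: HA; rewrite /ncmem => HA; rewrite -(mxvecK A); move: (mxvec A) HA => a Ha.
  pose P u := @ncmem R (nc_oplus S T) (block_mx (vec_mx u) 0 0 0).
  apply: (sub_row_ind (P := P) _ _ _ Ha).
  - by rewrite /P vec_mx0 block_mx0; apply: ncmem0.
  - move=> c u v Hu Hv; rewrite /P vec_mxD vec_mxZ.
    have -> : block_mx (c *: vec_mx u + vec_mx v) 0 0 0 =
      c *: block_mx (vec_mx u) 0 0 0 + block_mx (vec_mx v) 0 0 (0 : 'M_(ncdim T)).
      by rewrite scale_block_mx add_block_mx !scaler0 !addr0.
    exact: ncmemC.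
  move=> i; rewrite /P /ncmem /=.
  apply: submx_trans (addsmxSl _ _); apply: (sumsmx_sup i) => //.
  by rewrite genmxE.
move: HB; rewrite /ncmem => HB; rewrite -(mxvecK B); move: (mxvec B) HB => b Hb.
pose P u := @ncmem R (nc_oplus S T) (block_mx 0 0 0 (vec_mx u)).
apply: (sub_row_ind (P := P) _ _ _ Hb).
- by rewrite /P vec_mx0 block_mx0; apply: ncmem0.
- move=> c u v Hu Hv; rewrite /P vec_mxD vec_mxZ.
  have -> : block_mx 0 0 0 (c *: vec_mx u + vec_mx v) =
    c *: block_mx (0 : 'M_(ncdim S)) 0 0 (vec_mx u) + block_mx 0 0 0 (vec_mx v).
    by rewrite scale_block_mx add_block_mx !scaler0 !addr0.
  exact: ncmemC.
move=> i; rewrite /P /ncmem /=.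
apply: submx_trans (addsmxSr _ _); apply: (sumsmx_sup i) => //.
by rewrite genmxE.
Qed.

Lemma ncmem_oplus_inv (S T : ncgraph R) M :
  @ncmem R (nc_oplus S T) M ->
  exists A B, M = block_mx A 0 0 B /\ @ncmem R S A /\ @ncmem R T B.
Proof.
rewrite /ncmem -{2}(mxvecK M); move: (mxvec M) => u.
pose P (u : 'rV_((ncdim S + ncdim T) * (ncdim S + ncdim T))) :=
  exists A B, vec_mx u = block_mx A 0 0 B /\ (mxvec A <= ncsp S)%MS /\ (mxvec B <= ncsp T)%MS.
have P0 : P 0 by exists 0, 0; rewrite vec_mx0 block_mx0 !mxvec0 !sub0mx.
have PD : forall u v, P u -> P v -> P (u + v).
  move=> x y [A [B [eA [HA HB]]]] [A' [B' [eA' [HA' HB']]]]; exists (A + A'), (B + B').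
  rewrite vec_mxD eA eA' add_block_mx !addr0 !mxvecD; split => //.
  by split; rewrite addmx_sub.
apply: (sub_adds_ind (P := P)) => // v.
  apply: (sub_sums_ind (P := P)) => // i w; apply: sub_gen_ind => a.
  exists (a *: vec_mx (row i (ncsp S))), 0.
  rewrite vec_mxZ mxvecK scale_block_mx !scaler0 mxvec0 sub0mx mxvecZ vec_mxK.
  by rewrite scalemx_sub ?row_sub.
apply: (sub_sums_ind (P := P)) => // i w; apply: sub_gen_ind => a.
exists 0, (a *: vec_mx (row i (ncsp T))).
rewrite vec_mxZ mxvecK scale_block_mx !scaler0 mxvec0 sub0mx mxvecZ vec_mxK.
by rewrite scalemx_sub ?row_sub.
Qed.

Lemma mx_dim0 m n (M N : 'M[C]_(m, n)) : m = 0%N -> M = N.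
Proof. by move=> e; move: M N; rewrite e => M N; rewrite (flatmx0 M) (flatmx0 N). Qed.

Lemma ncmem_hat_delta (G : graph) (x : gV G) :
  @ncmem R (nc_hat R G) (delta_mx (enum_rank x) (enum_rank x)).
Proof.
rewrite /ncmem /=; apply: (sumsmx_sup x) => //; apply: (sumsmx_sup x).
  by rewrite /gsim eqxx.
by rewrite genmxE.
Qed.

Lemma ncmem_zero (A : 'M[C]_(ncdim (nc_zero R))) : @ncmem R (nc_zero R) A.
Proof. by rewrite /ncmem (thinmx0 (mxvec A)) sub0mx. Qed.


Lemma nc_le_oplus_zero (X : ncgraph R) : nc_le (nc_oplus X (nc_zero R)) X.
Proof.
exists 1%N, (fun _ => row_mx 1%:M 0 : 'M[C]_(ncdim X, ncdim X + 0)); split.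
  rewrite big_ord1 adjmx_row adjmx1 adjmx0 mul_col_row mul1mx mulmx0 mul0mx.
  rewrite [RHS]scalar_mx_block; congr block_mx => //; by apply: mx_dim0.
move=> i j M HM; rewrite adjmx_row adjmx1 adjmx0 mul_col_mx mul1mx mul0mx.
rewrite mul_col_row mulmx1 mulmx0 mul0mx.
by apply: ncmem_oplus => //; apply: ncmem_zero.
Qed.

Lemma nc_le_zero_oplus (Z X : ncgraph R) : ncdim Z = 0%N -> nc_le (nc_oplus Z X) X.
Proof.
move=> Z0.
exists 1%N, (fun _ => row_mx 0 1%:M : 'M[C]_(ncdim X, ncdim Z + ncdim X)); split.
  rewrite big_ord1 adjmx_row adjmx1 adjmx0 mul_col_row mul1mx mulmx0 mul0mx.
  rewrite mulmx1 [RHS]scalar_mx_block; congr block_mx; exact: mx_dim0 Z0.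
move=> i j M HM; rewrite adjmx_row adjmx1 adjmx0 mul_col_mx mul1mx mul0mx.
rewrite mul_col_row !mulmx1 !mulmx0.
by apply: ncmem_oplus => //; apply: ncmem0.
Qed.

Lemma nc_le_pad (H : graph) n k :
  nc_le (ncnf_from R k (nseq n gempty ++ [:: H])) (nc_tens (nc_hat R H) (nc_C R (k + n))).
Proof.
elim: n k => [|n IH] k /=.
  by rewrite addn0; apply: nc_le_oplus_zero.
apply: nc_le_trans (nc_le_zero_oplus _ _) _.
  by rewrite /= card_void.
by rewrite addnS -addSn; apply: IH.
Qed.


Lemma mxsub_rank m n m' n' f g (M : 'M[C]_(m, n)) :
  (\rank (mxsub f g M : 'M_(m', n')) <= \rank M)%N.
Proof.
have -> : (mxsub f g M : 'M_(m', n')) = rowsub f 1%:M *m M *m colsub g 1%:M.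
  by rewrite -rowsubE -mxsub_mul mulmx1.
by apply: leq_trans (mxrankM_maxl _ _) _; apply: mxrankM_maxr.
Qed.

Lemma rank_tens1 n q (A : 'M[C]_n) : A != 0 -> (q <= \rank (A *t (1%:M : 'M[C]_q)))%N.
Proof.
move=> /eqP nzA.
case: (pickP (fun ab : 'I_n * 'I_n => A ab.1 ab.2 != 0)) => [[a b] /= Aab | H]; last first.
  by case: nzA; apply/matrixP => a b; rewrite mxE; move: (H (a, b)) => /= /negbFE/eqP.
have E : (mxsub (fun l : 'I_q => mxtens_index (a, l)) (fun l : 'I_q => mxtens_index (b, l))
            (A *t (1%:M : 'M[C]_q)) : 'M_q) = A a b *: 1%:M.
  by apply/matrixP => i j; rewrite mxE tensmxE [RHS]mxE.
have := mxsub_rank (fun l : 'I_q => mxtens_index (a, l)) (fun l : 'I_q => mxtens_index (b, l))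
            (A *t (1%:M : 'M[C]_q)).
by rewrite E mxrank_scale_nz // mxrank1.
Qed.



Lemma adj_mul_eq0 m n (Z : 'M[C]_(m, n)) : adjmx Z *m Z = 0 -> Z = 0.
Proof.
move=> H; apply/matrixP => l j.
have Hs : \sum_(l' < m) (Z l' j * conjc (Z l' j)) = 0.
  transitivity ((adjmx Z *m Z) j j); last by rewrite H mxE.
  by rewrite mxE; apply: eq_bigr => l' _; rewrite !mxE mulrC.
have := @psumr_eq0P _ _ predT _ (fun i _ => mulcJ_ge0 (Z i j)) Hs l isT.
by move/eqP; rewrite mulf_eq0 conjc_eq0 orbb mxE => /eqP.
Qed.


Lemma adjmx_tens m n p q (A : 'M[C]_(m, n)) (B : 'M[C]_(p, q)) :
  adjmx (A *t B) = adjmx A *t adjmx B.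
Proof. by rewrite /adjmx map_mxT trmx_tens. Qed.

Lemma adjmx_delta m n (i : 'I_m) (j : 'I_n) :
  adjmx (delta_mx i j : 'M[C]_(m, n)) = delta_mx j i.
Proof. by apply/matrixP => a b; rewrite !mxE conjc_nat andbC. Qed.

Lemma tens11 m n : (1%:M : 'M[C]_m) *t (1%:M : 'M[C]_n) = 1%:M.
Proof.
apply/matrixP => i j; case: (mxtens_indexP i) => i1 i2; case: (mxtens_indexP j) => j1 j2.
rewrite tensmxE !mxE (can_eq (@mxtens_indexK _ _)) xpair_eqE.
by case: (i1 == j1); case: (i2 == j2); rewrite /= ?mulr1 ?mulr0 ?mul0r.
Qed.

Lemma tensmx_suml m n p q (I : finType) (F : I -> 'M[C]_(m, n)) (B : 'M[C]_(p, q)) :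
  (\sum_i F i) *t B = \sum_i (F i *t B).
Proof.
elim/big_rec2: _ => [|i x y _ <-]; first by rewrite tens0mx.
by rewrite tensmxDl.
Qed.

Lemma head_zero (G : graph) k q n (E1 : 'M[C]_(#|gV G| * k, n * q)) :
  (k < q)%N ->
  (forall M, @ncmem R (nc_tens (nc_hat R G) (nc_C R k)) M ->
     exists A : 'M[C]_n, adjmx E1 *m M *m E1 = A *t (1%:M : 'M[C]_q)) ->
  E1 = 0.
Proof.
move=> kq HE.
pose Rx (r : 'I_#|gV G|) := (delta_mx 0 r : 'M[C]_(1, #|gV G|)) *t (1%:M : 'M[C]_k).
have P r : adjmx (Rx r) *m Rx r = delta_mx r r *t 1%:M.
  by rewrite /Rx adjmx_tens adjmx_delta adjmx1 tensmx_mul mul_delta_mx mulmx1.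
have Hr r : Rx r *m E1 = 0.
  have Hm : @ncmem R (nc_tens (nc_hat R G) (nc_C R k)) (delta_mx r r *t 1%:M).
    apply: ncmem_tensC; have := ncmem_hat_delta (enum_val r).
    by rewrite enum_valK.
  case: (HE _ Hm) => A HA.
  move: HA; rewrite -P -!mulmxA mulmxA -adjmxM.
  set Z := Rx r *m E1 => HA.
  have A0 : A = 0.
    apply/eqP; apply/negPn/negP => nz.
    have := rank_tens1 q nz; rewrite -HA => h.
    have := leq_trans h (mxrankM_maxr _ _).
    have := rank_leq_row Z; rewrite [in X in (_ <= X)%N -> _]mul1n => h1 h2.
    by move: (leq_trans h2 h1); rewrite leqNgt kq.
  by apply: adj_mul_eq0; rewrite HA A0 tens0mx.
have -> : E1 = 1%:M *m E1 by rewrite mul1mx.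
rewrite -tens11 mx1_sum_delta tensmx_suml mulmx_suml big1 // => r _.
by rewrite -P -mulmxA Hr mulmx0.
Qed.


Definition hsel (b : bool) (G : graph) k :
    'M[C]_(#|gV (if b then gempty else G)| * k, #|gV G| * k) :=
  match b as b' return 'M[C]_(#|gV (if b' then gempty else G)| * k, #|gV G| * k) with
  | true => 0 | false => 1%:M end.

Fixpoint projD q k Gs {struct Gs} :
    'M[C]_(ncdim (ncnf_from R k (restr q k Gs)), ncdim (ncnf_from R k Gs)) :=
  match Gs return 'M[C]_(ncdim (ncnf_from R k (restr q k Gs)), ncdim (ncnf_from R k Gs)) with
  | [::] => 0
  | G :: Gs' => block_mx (hsel (k < q)%N G k) 0 0 (projD q k.+1 Gs')
  end.

Lemma hsel_mem b G k A1 :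
  @ncmem R (nc_tens (nc_hat R (if b then gempty else G)) (nc_C R k)) A1 ->
  @ncmem R (nc_tens (nc_hat R G) (nc_C R k)) (adjmx (hsel b G k) *m A1 *m hsel b G k).
Proof.
case: b A1 => A1 H /=; first by rewrite mulmx0; apply: ncmem0.
by rewrite adjmx1 mul1mx mulmx1.
Qed.

Lemma projD_mem q k Gs A :
  @ncmem R (ncnf_from R k (restr q k Gs)) A ->
  @ncmem R (ncnf_from R k Gs) (adjmx (projD q k Gs) *m A *m projD q k Gs).
Proof.
elim: Gs k A => [|G Gs IH] k A /=; first by rewrite mulmx0 => _; apply: ncmem0.
move/ncmem_oplus_inv => [A1 [A2 [-> [H1 H2]]]].
rewrite adjmx_block !adjmx0 !mulmx_block !mulmx0 !mul0mx !addr0 !add0r.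
rewrite !mul0mx.
apply: ncmem_oplus; first exact: hsel_mem.
exact: IH.
Qed.

Lemma hsel_fix (b : bool) G k m (E1 : 'M[C]_(#|gV G| * k, m)) :
  (b -> E1 = 0) -> adjmx (hsel b G k) *m (hsel b G k *m E1) = E1.
Proof.
by case: b E1 => E1 H /=; [rewrite mul0mx mulmx0 H | rewrite adjmx1 !mul1mx].
Qed.

Lemma projD_fix q k Gs n (E : 'M[C]_(ncdim (ncnf_from R k Gs), n * q)) :
  (forall M, @ncmem R (ncnf_from R k Gs) M ->
     exists A : 'M[C]_n, adjmx E *m M *m E = A *t (1%:M : 'M[C]_q)) ->
  adjmx (projD q k Gs) *m (projD q k Gs *m E) = E.
Proof.
elim: Gs k E => [|G Gs IH] k E HE /=; first by apply: mx_dim0.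
pose E' : 'M[C]_(#|gV G| * k + ncdim (ncnf_from R k.+1 Gs), n * q) := E.
have eE : E = col_mx (usubmx E') (dsubmx E') := esym (vsubmxK E').
move: HE; rewrite eE; move: (usubmx E') (dsubmx E') => E1 E2 HE.
rewrite mul_block_col adjmx_block !adjmx0 mul_block_col.
rewrite !mul0mx !addr0 !add0r; congr col_mx.
  apply: hsel_fix => kq; apply: (head_zero kq) => M1 H1.
  have := HE (block_mx M1 0 0 0) (ncmem_oplus H1 (ncmem0 _)).
  rewrite adjmx_col mul_row_block mul_row_col.
  by rewrite !mulmx0 !addr0 mul0mx addr0.
apply: IH => M2 H2.
have := HE (block_mx 0 0 0 M2) (ncmem_oplus (ncmem0 _) H2).
rewrite adjmx_col mul_row_block mul_row_col.
by rewrite !mulmx0 !add0r mul0mx add0r.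
Qed.

End NCL.

Lemma size_restr q k Gs : size (restr q k Gs) = size Gs.
Proof. by elim: Gs k => [|G Gs IH] k //=; rewrite IH. Qed.

Lemma nth_restr q k Gs d :
  nth gempty (restr q k Gs) d = if (k + d < q)%N then gempty else nth gempty Gs d.
Proof.
elim: Gs k d => [|G Gs IH] k d /=; first by rewrite !nth_nil; case: ifP.
case: d => [|d] /=; first by rewrite addn0.
by rewrite IH addSnnS.
Qed.

Unset Implicit Arguments.
Set Strict Implicit.

Theorem corollary3p3 (R : realType) (f : graph -> R) (alpha beta : R) :
  in_DeltaG f -> 1 <= alpha -> alpha <= beta ->
  falpha_monotone f alpha ->
  forall (H : graph) (Gs : seq graph) (q : nat), (0 < q)%N ->
  nc_le (nc_tens (nc_hat R H) (nc_C R q)) (ncnf R Gs) ->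
  f H * powR q%:R beta
    <= \sum_(d < size Gs) f (nth gempty Gs d) * powR (d.+1)%:R beta.
Proof.
move=> [f0 [fe [f1 _]]] a1 ab mono H Gs q q0 Hle.
have step1 : nc_le (nc_tens (nc_hat R H) (nc_C R q)) (ncnf R (restr q 1 Gs)).
  case: Hle => k [E [HE1 HE2]].
  have fixE i : adjmx (projD R q 1 Gs) *m (projD R q 1 Gs *m E i) = E i.
    apply: projD_fix => M HM.
    have := HE2 i i M HM; case/ncmem_tensC_inv => A [eA _].
    by exists A.
  exists k, (fun i => projD R q 1 Gs *m E i); split.
    rewrite -HE1; apply: eq_bigr => i _.
    by rewrite adjmxM -mulmxA fixE.
  move=> i j A HA; rewrite !adjmxM.
  have -> : adjmx (E i) *m adjmx (projD R q 1 Gs) *m A *m (projD R q 1 Gs *m E j) =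
     adjmx (E i) *m (adjmx (projD R q 1 Gs) *m A *m projD R q 1 Gs) *m E j.
    by rewrite !mulmxA.
  by apply: HE2; apply: projD_mem.
have step2 : nc_le (ncnf R (nseq q.-1 gempty ++ [:: H])) (nc_tens (nc_hat R H) (nc_C R q)).
  by have := nc_le_pad R H q.-1 1; rewrite add1n prednK.
have := mono _ _ (nc_le_trans step2 step1).
rewrite /falpha size_cat size_nseq /= addn1 big_ord_recr /=.
rewrite nth_cat size_nseq ltnn subnn /= prednK // big1 => [|d _]; last first.
  by rewrite nth_cat size_nseq ltn_ord nth_nseq ltn_ord fe mul0r.
rewrite add0r size_restr => Hal.
have spl (x : nat) : (0 < x)%N -> x%:R `^ beta = x%:R `^ alpha * x%:R `^ (beta - alpha) :> R.
  move=> x0; rewrite -powRD; first by rewrite addrC subrK.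
  by rewrite pnatr_eq0 -lt0n x0 implybT.
have ba : 0 <= beta - alpha by rewrite subr_ge0.
rewrite spl // mulrA.
apply: le_trans (ler_wpM2r (powR_ge0 _ _) Hal) _.
rewrite mulr_suml; apply: ler_sum => d _.
rewrite nth_restr add1n; case: ifP => h.
  by rewrite fe !mul0r mulr_ge0 ?powR_ge0.
rewrite spl // mulrA -!mulrA; apply: ler_wpM2l; first exact: f0.
apply: ler_wpM2l; first exact: powR_ge0.
apply: ge0_ler_powR => //; rewrite ?nnegrE ?ler0n // ler_nat.
by rewrite leqNgt h.
Qed.
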